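(* Let $r,d\ge 1$, let $G=S_{r,d}$, and let $H=\langle h\rangle$ be a nontrivial cyclic subgroup of $G$. The following are equivalent: (1) $H$ is verbally closed in $G$; (2) $H$ is a retract of $G$; (3) the image of $h$ in $G/G'$ (a free abelian group of rank $r$) is primitive, i.e. it can be included in a basis of $G/G'$.
   Context: $S_{r,d}=F_r/F_r^{(d)}$, the free solvable group of rank $r$ and derived length $d$ ($F_r$ free of rank $r$, $F^{(d)}$ the $d$-th derived subgroup); $G'$ is the derived subgroup. A subgroup $H\le G$ is verbally closed in $G$ if for every group word $w(x_1,\dots,x_n)$ (without constants) and every $h\in H$, if the equation $w(x_1,\dots,x_n)=h$ has a solution in $G$, then it has a solution in $H$. A retract of $G$ is a subgroup $H$ for which there is an endomorphism $\rho:G\to G$ with $\rho(G)\subseteq H$ and $\rho|_H=\mathrm{id}_H$. *)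

(* Defs.v *)
(* Free solvable group S_{r,d} = F_r / F_r^{(d)} presented
   concretely: elements are (unreduced) words over the letters x_i^{+-1},
   and two words are equal in S_{r,d} iff  u v^{-1}  lies in F_r^{(d)}. *)
From mathcomp Require Import all_boot all_order all_algebra.
Set Implicit Arguments. Unset Strict Implicit. Unset Printing Implicit Defensive.

(* letter (i, false) = x_i, letter (i, true) = x_i^{-1} *)
Definition letter (n : nat) := ('I_n * bool)%type.
Definition word (n : nat) := seq (letter n).

Definition linv n (a : letter n) : letter n := (a.1, ~~ a.2).
Definition winv n (w : word n) : word n := rev (map (@linv n) w).

Definition wpow n (w : word n) (k : int) : word n :=
  match k with
  | Posz m => flatten (nseq m w)
  | Negz m => flatten (nseq m.+1 (winv w))
  end.

Definition wcomm n (u v : word n) : word n := winv u ++ winv v ++ u ++ v.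

(* Given (the set of words representing) a subgroup P of F_n, the words
   representing [P, P]: generated by commutators, closed under products,
   inverses and free insertion/deletion of a a^{-1}. *)
Inductive comm_closure n (P : word n -> Prop) : word n -> Prop :=
| cc_nil : comm_closure P [::]
| cc_comm u v : P u -> P v -> comm_closure P (wcomm u v)
| cc_cat u v : comm_closure P u -> comm_closure P v -> comm_closure P (u ++ v)
| cc_inv u : comm_closure P u -> comm_closure P (winv u)
| cc_ins u v a : comm_closure P (u ++ v) ->
    comm_closure P (u ++ a :: linv a :: v)
| cc_del u v a : comm_closure P (u ++ a :: linv a :: v) ->
    comm_closure P (u ++ v).

Fixpoint derived n (k : nat) : word n -> Prop :=
  match k with
  | 0 => fun _ => True
  | k'.+1 => comm_closure (@derived n k')
  end.

Definition seq_eq r d (u v : word r) : Prop := derived d (u ++ winv v).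

(* equality in the abelianization G/G' of G = S_{r,d} (d >= 1), i.e. modulo
   G' = F_r' / F_r^{(d)}; since F_r^{(d)} <= F_r', this is equality mod F_r' *)
Definition ab_eq r (u v : word r) : Prop := derived 1 (u ++ winv v).

Definition weval n r (w : word n) (g : 'I_n -> word r) : word r :=
  flatten [seq (if a.2 then winv (g a.1) else g a.1) | a <- w].

Definition verbally_closed_cyclic r d (h : word r) : Prop :=
  forall (n : nat) (w : word n) (k : int),
    (exists g : 'I_n -> word r, seq_eq d (weval w g) (wpow h k)) ->
    exists m : 'I_n -> int, seq_eq d (weval w (fun i => wpow h (m i))) (wpow h k).

Definition is_endo r d (f : word r -> word r) : Prop :=
  (forall u v, seq_eq d u v -> seq_eq d (f u) (f v)) /\
  (forall u v, seq_eq d (f (u ++ v)) (f u ++ f v)).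

Definition retract_cyclic r d (h : word r) : Prop :=
  exists f : word r -> word r, is_endo d f /\
    (forall g, exists k : int, seq_eq d (f g) (wpow h k)) /\
    (forall k : int, seq_eq d (f (wpow h k)) (wpow h k)).

Definition lincomb r (b : 'I_r -> word r) (c : 'I_r -> int) : word r :=
  flatten [seq wpow (b i) (c i) | i <- enum 'I_r].

Definition ab_basis r (b : 'I_r -> word r) : Prop :=
  (forall g : word r, exists c : 'I_r -> int, ab_eq g (lincomb b c)) /\
  (forall c : 'I_r -> int, ab_eq (lincomb b c) [::] -> forall i, c i = 0%R).

Definition ab_primitive r (h : word r) : Prop :=
  exists b : 'I_r -> word r, ab_basis b /\ exists i, ab_eq (b i) h.

(* Main.v *)
Require Import Defs.
From mathcomp Require Import all_boot all_order all_algebra.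
From mathcomp Require Import zify.
Set Implicit Arguments. Unset Strict Implicit. Unset Printing Implicit Defensive.
Import GRing.Theory Num.Theory.
Local Open Scope ring_scope.

Lemma linvK n (a : letter n) : linv (linv a) = a.
Proof. by case: a => i b; rewrite /linv /= negbK. Qed.

Lemma winv_cat n (u v : word n) : winv (u ++ v) = winv v ++ winv u.
Proof. by rewrite /winv map_cat rev_cat. Qed.

Lemma winvK n (u : word n) : winv (winv u) = u.
Proof. by rewrite /winv map_rev revK -map_comp (eq_map (@linvK n)) map_id. Qed.

Lemma winv_cons n (a : letter n) u : winv (a :: u) = winv u ++ [:: linv a].
Proof. by rewrite -cat1s winv_cat. Qed.

Lemma winv_nil n : winv ([::] : word n) = [::].
Proof. by []. Qed.

Lemma cc_cancel_ins n (P : word n -> Prop) (z u v : word n) :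
  comm_closure P (u ++ v) -> comm_closure P (u ++ z ++ winv z ++ v).
Proof.
elim: z u v => [|a z IH] u v H //=.
rewrite winv_cons -!catA /=.
have := IH (u ++ [:: a]) (linv a :: v).
rewrite -!catA /=; apply; exact: cc_ins.
Qed.

Lemma cc_cancel_del n (P : word n -> Prop) (z u v : word n) :
  comm_closure P (u ++ z ++ winv z ++ v) -> comm_closure P (u ++ v).
Proof.
elim: z u v => [|a z IH] u v H //=.
apply: (@cc_del _ _ u v a).
have := IH (u ++ [:: a]) (linv a :: v).
rewrite -!catA /=; apply.
by move: H; rewrite winv_cons -!catA.
Qed.

Lemma cc_cancel_del' n (P : word n -> Prop) (z u v : word n) :
  comm_closure P (u ++ winv z ++ z ++ v) -> comm_closure P (u ++ v).
Proof. by move=> H; apply: (cc_cancel_del (z := winv z)); rewrite winvK. Qed.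

Lemma cc_cancel_ins' n (P : word n -> Prop) (z u v : word n) :
  comm_closure P (u ++ v) -> comm_closure P (u ++ winv z ++ z ++ v).
Proof. by move=> H; rewrite -{2}(winvK z); apply: cc_cancel_ins. Qed.

Lemma del_at n (P : word n -> Prop) (u z v w : word n) :
  w = u ++ v -> comm_closure P (u ++ winv z ++ z ++ v) -> comm_closure P w.
Proof. by move=> ->; apply: cc_cancel_del'. Qed.

Lemma cc_conj n (P : word n -> Prop)
  (PC : forall z u, P u -> P (z ++ u ++ winv z)) z u :
  comm_closure P u -> comm_closure P (z ++ u ++ winv z).
Proof.
elim=> {u}.
- by have := @cc_cancel_ins _ _ z [::] [::] (cc_nil P); rewrite cats0.
- move=> u v Pu Pv.
  have := cc_comm (PC z u Pu) (PC z v Pv).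
  rewrite /wcomm !winv_cat !winvK -!catA => H.
  apply: (del_at (z:=z) (u := z ++ winv u) (v := winv v ++ u ++ v ++ winv z)); [by rewrite -!catA|rewrite -!catA].
  apply: (del_at (z:=z) (u := z ++ winv u ++ winv z ++ z ++ winv v) (v := u ++ v ++ winv z)); [by rewrite -!catA|rewrite -!catA].
  apply: (del_at (z:=z) (u := z ++ winv u ++ winv z ++ z ++ winv v ++ winv z ++ z ++ u) (v := v ++ winv z)); [by rewrite -!catA|rewrite -!catA].
  exact: H.
- move=> u v _ Hu _ Hv.
  have := cc_cat Hu Hv; rewrite -!catA => H.
  apply: (del_at (z:=z) (u := z ++ u) (v := v ++ winv z)); [by rewrite -!catA|rewrite -!catA].
  exact: H.
- move=> u _ Hu; have := cc_inv Hu.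
  by rewrite !winv_cat winvK -!catA.
- move=> u v a _ H.
  have := cc_ins (u := z ++ u) (v := v ++ winv z) a.
  rewrite -!catA /=; apply; by rewrite -!catA in H.
- move=> u v a _ H.
  have := cc_del (u := z ++ u) (v := v ++ winv z) (a := a).
  rewrite -!catA /=; apply; by rewrite -!catA in H.
Qed.

Lemma derived_conj n d z (u : word n) : derived d u -> derived d (z ++ u ++ winv z).
Proof.
elim: d z u => [//|d IH] z u /=.
by apply: cc_conj => z' u'; apply: IH.
Qed.

Lemma D_nil n d : derived d.+1 ([::] : word n).
Proof. exact: cc_nil. Qed.

Lemma D_cat n d (u v : word n) : derived d.+1 u -> derived d.+1 v -> derived d.+1 (u ++ v).
Proof. exact: cc_cat. Qed.

Lemma D_inv n d (u : word n) : derived d.+1 u -> derived d.+1 (winv u).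
Proof. exact: cc_inv. Qed.

Lemma D_ins n d (u z v : word n) : derived d.+1 (u ++ v) -> derived d.+1 (u ++ z ++ winv z ++ v).
Proof. exact: cc_cancel_ins. Qed.

Lemma D_del n d (u z v : word n) : derived d.+1 (u ++ z ++ winv z ++ v) -> derived d.+1 (u ++ v).
Proof. exact: cc_cancel_del. Qed.

Lemma D_del' n d (u z v : word n) : derived d.+1 (u ++ winv z ++ z ++ v) -> derived d.+1 (u ++ v).
Proof. exact: cc_cancel_del'. Qed.

Lemma D_ins' n d (u z v : word n) : derived d.+1 (u ++ v) -> derived d.+1 (u ++ winv z ++ z ++ v).
Proof. exact: cc_cancel_ins'. Qed.

Lemma D_del_at n d (u z v w : word n) :
  w = u ++ v -> derived d.+1 (u ++ winv z ++ z ++ v) -> derived d.+1 w.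
Proof. by move=> ->; apply: D_del'. Qed.

Lemma se_refl n d (u : word n) : seq_eq d.+1 u u.
Proof. by have := @D_ins n d [::] u [::] (D_nil _ _); rewrite cats0. Qed.

Lemma se_sym n d (u v : word n) : seq_eq d.+1 u v -> seq_eq d.+1 v u.
Proof. by rewrite /seq_eq => /D_inv; rewrite winv_cat winvK. Qed.

Lemma se_trans n d (u v w : word n) : seq_eq d.+1 u v -> seq_eq d.+1 v w -> seq_eq d.+1 u w.
Proof.
rewrite /seq_eq => H1 H2; have := D_cat H1 H2; rewrite -catA.
exact: (@D_del' n d u v).
Qed.

Lemma se_cat n d (u u' v v' : word n) : seq_eq d.+1 u u' -> seq_eq d.+1 v v' ->
  seq_eq d.+1 (u ++ v) (u' ++ v').
Proof.
rewrite /seq_eq => H1 H2.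
have H := D_cat (derived_conj u H2) H1; rewrite winv_cat.
apply: (D_del_at (u := u ++ v ++ winv v') (z := u) (v := winv u')); first by rewrite -!catA.
by rewrite -!catA in H *.
Qed.


Lemma se_cancel n d (u z v : word n) : seq_eq d.+1 (u ++ z ++ winv z ++ v) (u ++ v).
Proof.
have := se_refl d (u ++ v); rewrite /seq_eq -catA.
move=> H; have := D_ins z H; by rewrite -!catA.
Qed.

Lemma se_cancel' n d (u z v : word n) : seq_eq d.+1 (u ++ winv z ++ z ++ v) (u ++ v).
Proof. by have := se_cancel d u (winv z) v; rewrite winvK. Qed.

Lemma se_nil n d (u : word n) : seq_eq d.+1 u [::] <-> derived d.+1 u.
Proof. by rewrite /seq_eq winv_nil cats0. Qed.

Lemma se_inv n d (u v : word n) : seq_eq d.+1 u v -> seq_eq d.+1 (winv u) (winv v).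
Proof.
rewrite /seq_eq winvK => /se_sym H; have := derived_conj (winv u) H.
rewrite /seq_eq winvK -!catA.
move=> H'; apply: (D_del_at (u := winv u ++ v) (z := u) (v := [::])); first by rewrite cats0.
by rewrite cats0 -!catA.
Qed.

Lemma int_ind3 (P : int -> Prop) : P 0 -> (forall k, P k -> P (k + 1)) ->
  (forall k, P k -> P (k - 1)) -> forall k, P k.
Proof.
move=> P0 PS PP; case=> m.
  elim: m => [|m IH]; first exact: P0.
  have -> : Posz m.+1 = Posz m + 1 by lia.
  exact: PS.
elim: m => [|m IH].
  have -> : Negz 0 = 0 - 1 by lia.
  exact: PP.
have -> : Negz m.+1 = Negz m - 1 by lia. exact: PP.
Qed.

Lemma flatten_nseqSr T m (w : seq T) : flatten (nseq m.+1 w) = flatten (nseq m w) ++ w.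
Proof.
elim: m => [|m IH]; first by rewrite /= cats0.
change (w ++ flatten (nseq m.+1 w) = (w ++ flatten (nseq m w)) ++ w).
by rewrite IH catA.
Qed.

Lemma wpow0 n (h : word n) : wpow h 0 = [::].
Proof. by []. Qed.

Lemma wpow_succ n d (h : word n) k : seq_eq d.+1 (wpow h (k + 1)) (wpow h k ++ h).
Proof.
case: k => m.
  have -> : Posz m + 1 = Posz m.+1 by lia.
  change (seq_eq d.+1 (flatten (nseq m.+1 h)) (flatten (nseq m h) ++ h)).
  rewrite flatten_nseqSr; exact: se_refl.
case: m => [|m].
  have -> : Negz 0 + 1 = 0 by lia.
  rewrite wpow0 /= !cats0; apply: se_sym.
  by have := se_cancel' d [::] h [::]; rewrite /= cats0.
have -> : Negz m.+1 + 1 = Negz m by lia.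
change (seq_eq d.+1 (flatten (nseq m.+1 (winv h))) (flatten (nseq m.+2 (winv h)) ++ h)).
have E1 := flatten_nseqSr m (winv h); have E2 := flatten_nseqSr m.+1 (winv h).
rewrite E2 E1 -!catA; apply: se_sym.
have := se_cancel' d (flatten (nseq m (winv h)) ++ winv h) h [::].
by rewrite !cats0 -!catA.
Qed.

Lemma wpow_pred n d (h : word n) k : seq_eq d.+1 (wpow h (k - 1)) (wpow h k ++ winv h).
Proof.
have := wpow_succ d h (k - 1); rewrite subrK => H.
apply: (se_trans _ (se_sym (se_cat H (se_refl d (winv h))))).
rewrite -catA; apply: se_sym.
by have := se_cancel d (wpow h (k - 1)) h [::]; rewrite !cats0.
Qed.

Lemma wpow_add n d (h : word n) a b :
  seq_eq d.+1 (wpow h a ++ wpow h b) (wpow h (a + b)).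
Proof.
elim/int_ind3: b => [|b IH|b IH].
- by rewrite wpow0 cats0 addr0; exact: se_refl.
- apply: se_trans (se_cat (se_refl d _) (wpow_succ d h b)) _.
  rewrite catA addrA; apply: se_trans (se_cat IH (se_refl d h)) _.
  exact: se_sym (wpow_succ _ _ _).
- apply: se_trans (se_cat (se_refl d _) (wpow_pred d h b)) _.
  rewrite catA addrA; apply: se_trans (se_cat IH (se_refl d _)) _.
  exact: se_sym (wpow_pred _ _ _).
Qed.

Lemma wpow_opp n d (h : word n) k : seq_eq d.+1 (winv (wpow h k)) (wpow h (- k)).
Proof.
have H := wpow_add d h k (- k); rewrite subrr wpow0 in H.
have H2 := se_cat (se_refl d (winv (wpow h k))) H; rewrite cats0 in H2.
apply: se_trans (se_sym H2) _.
exact: se_cancel' d [::] (wpow h k) (wpow h (- k)).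
Qed.

Lemma weval_cat m n (u v : word m) (g : 'I_m -> word n) :
  weval (u ++ v) g = weval u g ++ weval v g.
Proof. by rewrite /weval map_cat flatten_cat. Qed.

Lemma weval_cons m n (a : letter m) u (g : 'I_m -> word n) :
  weval (a :: u) g = (if a.2 then winv (g a.1) else g a.1) ++ weval u g.
Proof. by []. Qed.

Lemma weval_winv m n (w : word m) (g : 'I_m -> word n) :
  weval (winv w) g = winv (weval w g).
Proof.
elim: w => [//|a w IH].
rewrite winv_cons weval_cat IH weval_cons winv_cat; congr (_ ++ _).
rewrite /weval /= cats0; case: a => i [] /=; by rewrite ?winvK.
Qed.

Lemma weval_nseq m n k (w : word m) (g : 'I_m -> word n) :
  weval (flatten (nseq k w)) g = flatten (nseq k (weval w g)).
Proof. elim: k => [//|k IH]; by rewrite [nseq _ _]/= [flatten _]/= weval_cat IH. Qed.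

Lemma weval_wpow m n (w : word m) k (g : 'I_m -> word n) :
  weval (wpow w k) g = wpow (weval w g) k.
Proof. by case: k => k; rewrite /wpow weval_nseq ?weval_winv. Qed.

Lemma weval_cong m n d (w : word m) (g g' : 'I_m -> word n) :
  (forall i, seq_eq d.+1 (g i) (g' i)) -> seq_eq d.+1 (weval w g) (weval w g').
Proof.
move=> H; elim: w => [|a w IH]; first exact: se_refl.
rewrite !weval_cons; apply: se_cat IH.
by case: a.2; [apply: se_inv|]; apply: H.
Qed.

Definition sgl n (a : letter n) : int := if a.2 then -1 else 1.

Lemma weval_pow m n d (w : word m) (h : word n) (mm : 'I_m -> int) :
  seq_eq d.+1 (weval w (fun i => wpow h (mm i)))
              (wpow h (\sum_(a <- w) sgl a * mm a.1)).
Proof.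
elim: w => [|a w IH]; first by rewrite big_nil; exact: se_refl.
rewrite weval_cons big_cons.
apply: se_trans (se_cat (se_refl d _) IH) _.
apply: se_trans (wpow_add _ _ _ _).
apply: se_cat (se_refl _ _).
rewrite /sgl; case: a.2; last by rewrite mul1r; exact: se_refl.
by rewrite mulN1r; exact: wpow_opp.
Qed.

Definition el r (a : letter r) : 'rV[int]_r := sgl a *: delta_mx 0 a.1.
Definition exps r (u : word r) : 'rV[int]_r := \sum_(a <- u) el a.

Lemma exps_cat r (u v : word r) : exps (u ++ v) = exps u + exps v.
Proof. by rewrite /exps big_cat. Qed.

Lemma exps_nil r : exps ([::] : word r) = 0.
Proof. by rewrite /exps big_nil. Qed.

Lemma exps_cons r (a : letter r) u : exps (a :: u) = el a + exps u.
Proof. by rewrite /exps big_cons. Qed.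

Lemma el_linv r (a : letter r) : el (linv a) = - el a.
Proof. by case: a => i [] ; rewrite /el /sgl /= ?scaleNr ?opprK. Qed.

Lemma exps_winv r (u : word r) : exps (winv u) = - exps u.
Proof.
elim: u => [|a u IH]; first by rewrite winv_nil exps_nil oppr0.
by rewrite winv_cons exps_cat IH exps_cons /exps big_cons big_nil addr0 el_linv opprD addrC.
Qed.

Lemma exps_nseq r m (w : word r) : exps (flatten (nseq m w)) = exps w *+ m.
Proof.
elim: m => [|m IH]; first by rewrite /= exps_nil.
by rewrite [nseq _ _]/= [flatten _]/= exps_cat IH mulrS.
Qed.

Lemma exps_wpow r (w : word r) k : exps (wpow w k) = k *: exps w.
Proof.
case: k => m; rewrite /wpow exps_nseq.
  by rewrite -natz scaler_nat.
by rewrite exps_winv NegzE scaleNr -natz scaler_nat mulNrn.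
Qed.

Lemma exps_flatten r (s : seq (word r)) : exps (flatten s) = \sum_(x <- s) exps x.
Proof.
elim: s => [|x s IH]; first by rewrite big_nil exps_nil.
by rewrite [flatten _]/= exps_cat IH big_cons.
Qed.

Lemma exps_weval m r (w : word m) (g : 'I_m -> word r) :
  exps (weval w g) = \sum_(a <- w) sgl a *: exps (g a.1).
Proof.
elim: w => [|a w IH]; first by rewrite big_nil exps_nil.
rewrite weval_cons exps_cat IH big_cons; congr (_ + _).
by rewrite /sgl; case: a.2; rewrite ?exps_winv ?scaleN1r ?scale1r.
Qed.

Lemma exps_lincomb r (b : 'I_r -> word r) c :
  exps (lincomb b c) = \sum_i c i *: exps (b i).
Proof.
rewrite /lincomb exps_flatten big_map big_enum /=.
by apply: eq_bigr => i _; rewrite exps_wpow.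
Qed.

Lemma cc_exps r (P : word r -> Prop) u : comm_closure P u -> exps u = 0.
Proof.
elim=> {u}.
- exact: exps_nil.
- move=> u v _ _; rewrite /wcomm !exps_cat !exps_winv.
  by rewrite (addrCA (- exps v)) addKr addNr.
- by move=> u v _ Hu _ Hv; rewrite exps_cat Hu Hv addr0.
- by move=> u _ Hu; rewrite exps_winv Hu oppr0.
- by move=> u v a _; rewrite !exps_cat !exps_cons el_linv addNKr.
- by move=> u v a _; rewrite !exps_cat !exps_cons el_linv addNKr.
Qed.

Lemma derived_exps r d (u : word r) : derived d.+1 u -> exps u = 0.
Proof. exact: cc_exps. Qed.

Lemma se_exps r d (u v : word r) : seq_eq d.+1 u v -> exps u = exps v.
Proof.
move/derived_exps; rewrite exps_cat exps_winv => /eqP.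
by rewrite subr_eq0 => /eqP.
Qed.

Lemma el_coord r (a : letter r) j : el a 0 j = sgl a * (a.1 == j)%:R.
Proof. by rewrite /el !mxE eqxx /= eq_sym. Qed.

Lemma exps_coord r (u : word r) j : exps u 0 j = \sum_(a <- u) sgl a * (a.1 == j)%:R.
Proof.
elim: u => [|a u IH]; first by rewrite exps_nil big_nil mxE.
by rewrite exps_cons mxE IH el_coord big_cons.
Qed.

Lemma pair_exps r (u : word r) (c : 'I_r -> int) :
  \sum_(a <- u) sgl a * c a.1 = \sum_j exps u 0 j * c j.
Proof.
apply/esym; under eq_bigr => j _ do rewrite exps_coord big_distrl /=.
rewrite exchange_big /=; apply: eq_bigr => a _.
rewrite (bigD1 a.1) //= eqxx mulr1 big1 ?addr0 // => j; rewrite eq_sym => /negbTE ->.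
by rewrite mulr0 mul0r.
Qed.

Lemma exps_nolinv r (a : letter r) s : linv a \notin s ->
  exps s 0 a.1 = sgl a * (count (fun b : letter r => b.1 == a.1) s)%:R.
Proof.
elim: s => [|b s IH]; first by rewrite exps_nil mxE mulr0.
rewrite in_cons negb_or => /andP [nb ns].
rewrite exps_cons mxE IH // el_coord /=.
case: eqP => [E|_]; last by rewrite mulr0 add0r add0n.
have Eb : b.2 = a.2.
  clear IH ns; move: nb; case: b E => i bb /= ->; case: a => j aa /=.
  by case: aa; case: bb; rewrite /linv /= ?eqxx.
by rewrite /sgl Eb /= natrD mulrDr mulr1.
Qed.

Lemma sgl_neq0 r (a : letter r) : sgl a != 0.
Proof. by rewrite /sgl; case: a.2. Qed.

Lemma exps0_D1 r (u : word r) : exps u = 0 -> derived 1 u.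
Proof.
have [N] := ubnP (size u); elim: N u => // N IH [|a u] Hs H0.
  exact: cc_nil.
have Hin : linv a \in u.
  apply/negPn/negP => Hn; move: H0 => /matrixP /(_ 0 a.1).
  rewrite exps_cons mxE el_coord eqxx exps_nolinv // !mxE => /eqP.
  rewrite mulr1 -{1}(mulr1 (sgl a)) -mulrDr mulf_eq0 (negbTE (sgl_neq0 a)) /=.
  by rewrite nat1r pnatr_eq0.
case/splitPr: Hin Hs H0 => v w Hs H0.
have Hvw : derived 1 (v ++ w).
  apply: IH; first by move: Hs; rewrite /= !size_cat /=; lia.
  by move: H0; rewrite exps_cons !exps_cat exps_cons el_linv => H0; rewrite -H0 addrCA addNKr.
have Hc : derived 1 (wcomm [:: linv a] (winv v)) by apply: cc_comm.
have E : winv [:: linv a] = [:: a] by rewrite /winv /= linvK.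
rewrite /wcomm winvK E in Hc.
have H := D_cat Hc Hvw.
apply: (D_del_at (u := [:: a] ++ v ++ [:: linv a]) (z := v) (v := w)); first by rewrite -!catA.
by rewrite -!catA in H *.
Qed.

Lemma exps_ab r (u v : word r) : exps u = exps v -> ab_eq u v.
Proof. by move=> E; apply: exps0_D1; rewrite exps_cat exps_winv E subrr. Qed.

Lemma ab_exps r (u v : word r) : ab_eq u v -> exps u = exps v.
Proof. exact: (@se_exps r 0). Qed.

Lemma smith_row r (a : 'rV[int]_r.+1) :
  exists g : int, exists R : 'M[int]_r.+1, R \in unitmx /\ a = g *: row 0 R.
Proof.
have [L uL [R uR [d _ E]]] := int_Smith_normal_form a.
exists (L 0 0 * d`_0), R; split => //.
rewrite E rowE scalemxAl; congr (_ *m _).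
apply/matrixP => i j; rewrite !mxE big_ord1 !ord1 !mxE /= eq_sym.
have -> : (j == 0%N :> nat) = (j == 0 :> 'I_r.+1) by []. by case: (j == 0 :> 'I_r.+1); rewrite ?mulr1 ?mulr0.
Qed.

Definition G1 r (a : 'rV[int]_r) := exists psi : 'I_r -> int, \sum_j a 0 j * psi j = 1.

Lemma unit_G1 r (a : 'rV[int]_r.+1) (g : int) (R : 'M[int]_r.+1) : g \is a GRing.unit -> R \in unitmx ->
  a = g *: row 0 R -> G1 a.
Proof.
move=> ug uR ->; exists (fun j => g^-1 * invmx R j 0).
have : (R *m invmx R) 0 0 = 1 by rewrite mulmxV // mxE.
rewrite mxE => <-; apply: eq_bigr => j _; rewrite !mxE.
by rewrite mulrCA !mulrA mulVr // mul1r.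
Qed.

Lemma G1_unit r (a : 'rV[int]_r.+1) (g : int) (R : 'M[int]_r.+1) : G1 a -> a = g *: row 0 R -> g \is a GRing.unit.
Proof.
move=> [psi Hp] Ea; apply/unitrP; exists (\sum_j R 0 j * psi j).
suff H : g * (\sum_j R 0 j * psi j) = 1 by rewrite mulrC H.
rewrite -Hp Ea big_distrr; apply: eq_bigr => j _; rewrite !mxE /=; exact: mulrA.
Qed.

Definition vword r (v : 'rV[int]_r) : word r := lincomb (fun i => [:: (i, false)]) (fun i => v 0 i).

Lemma exps_letter r (i : 'I_r) : exps [:: (i, false)] = delta_mx 0 i.
Proof. by rewrite exps_cons exps_nil addr0 /el /sgl /= scale1r. Qed.

Lemma exps_vword r (v : 'rV[int]_r) : exps (vword v) = v.
Proof.
rewrite /vword exps_lincomb [RHS]row_sum_delta; apply: eq_bigr => i _.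
by rewrite exps_letter.
Qed.

Lemma sum_rows r (c : 'I_r -> int) (M : 'M[int]_r) :
  \sum_i c i *: row i M = (\row_i c i) *m M.
Proof. by rewrite mulmx_sum_row; apply: eq_bigr => i _; rewrite mxE. Qed.

Lemma unit_prim r (h : word r.+1) R : R \in unitmx -> row 0 R = exps h -> ab_primitive h.
Proof.
move=> uR Eh; exists (fun k => vword (row k R)); split; last first.
  by exists 0; apply: exps_ab; rewrite exps_vword.
split.
  move=> g; exists (fun k => (exps g *m invmx R) 0 k); apply: exps_ab.
  rewrite exps_lincomb.
  under eq_bigr => k _ do rewrite exps_vword.
  rewrite sum_rows.
  have -> : \row_i (exps g *m invmx R) 0 i = exps g *m invmx R.
    by apply/matrixP => i j; rewrite !ord1 mxE.
  by rewrite mulmxKV.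
move=> c /ab_exps; rewrite exps_nil exps_lincomb.
under eq_bigr => k _ do rewrite exps_vword.
rewrite sum_rows => H i.
have := congr1 (fun M => (M *m invmx R) 0 i) H; rewrite /= mulmxK // mul0mx !mxE.
by [].
Qed.

Lemma G1_prim r (h : word r.+1) : G1 (exps h) -> ab_primitive h.
Proof.
move=> HG; have [g [R [uR Ea]]] := smith_row (exps h).
have ug := G1_unit HG Ea.
apply: (@unit_prim r h (g *: R)); first by rewrite unitmxZ.
rewrite Ea; apply/matrixP => i j; by rewrite !mxE.
Qed.

Lemma prim_G1 r (h : word r) : ab_primitive h -> G1 (exps h).
Proof.
move=> [b [[span _] [i Ei]]].
pose B : 'M[int]_r := \matrix_(k, j) exps (b k) 0 j.
have : forall j : 'I_r, exists c : 'I_r -> int, ab_eq [:: (j, false)] (lincomb b c).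
  by move=> j; apply: span.
case/fin_all_exists => C HC.
pose Cm : 'M[int]_r := \matrix_(j, k) C j k.
have CB : Cm *m B = 1%:M.
  apply/row_matrixP => j; rewrite row_mul row1 -exps_letter (ab_exps (HC j)).
  rewrite exps_lincomb mulmx_sum_row; apply: eq_bigr => k _.
  congr (_ *: _); first by rewrite !mxE.
  by apply/matrixP => x y; rewrite !mxE ord1.
have BC := mulmx1C CB.
exists (fun j => Cm j i).
have : (B *m Cm) i i = 1 by rewrite BC mxE eqxx.
rewrite mxE => <-; apply: eq_bigr => j _.
by rewrite mxE -(ab_exps Ei) mxE.
Qed.

Lemma ret_vc r d (h : word r) : retract_cyclic d.+1 h -> verbally_closed_cyclic d.+1 h.
Proof.
move=> [f [[fres fmul] [fimg fid]]].
have fnil : seq_eq d.+1 (f [::]) [::].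
  set X := f [::]; have H : seq_eq d.+1 X (X ++ X) := fmul [::] [::].
  apply: se_trans (se_sym (se_cancel' d [::] X X)) _.
  apply: se_trans (se_cat (se_refl d (winv X)) (se_sym H)) _.
  by have := se_cancel' d [::] X [::]; rewrite /= cats0.
have finv u : seq_eq d.+1 (f (winv u)) (winv (f u)).
  have H1 : seq_eq d.+1 (f (winv u) ++ f u) [::].
    apply: se_trans (se_sym (fmul _ _)) _; apply: se_trans fnil.
    apply: fres; by have := se_cancel' d [::] u [::]; rewrite /= cats0.
  have := se_cancel d (f (winv u)) (f u) [::]; rewrite !cats0 => Hc; apply: se_trans (se_sym Hc) _; rewrite catA.
  by have := se_cat H1 (se_refl d (winv (f u))).
have fw n (w : word n) g : seq_eq d.+1 (f (weval w g)) (weval w (fun i => f (g i))).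
  elim: w => [|a w IH]; first exact: fnil.
  rewrite !weval_cons; apply: se_trans (fmul _ _) _; apply: se_cat IH.
  by case: a.2; [exact: finv | exact: se_refl].
move=> n w k [g Hg].
have : forall i, exists m : int, seq_eq d.+1 (f (g i)) (wpow h m) by move=> i; apply: fimg.
case/fin_all_exists => m Hm; exists m.
apply: se_trans (weval_cong w (fun i => se_sym (Hm i))) _.
apply: se_trans (se_sym (fw _ _ _)) _.
apply: se_trans (fres _ _ Hg) _; exact: fid.
Qed.

Lemma G1_ret r d (h : word r) : G1 (exps h) -> retract_cyclic d.+1 h.
Proof.
move=> [psi Hp].
pose s (u : word r) := \sum_j exps u 0 j * psi j.
have sD u v : s (u ++ v) = s u + s v.
  by rewrite /s -big_split; apply: eq_bigr => j _; rewrite exps_cat mxE mulrDl.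
exists (fun u => wpow h (s u)); split; [split|split].
- by move=> u v /se_exps E; rewrite /s E; exact: se_refl.
- by move=> u v; rewrite sD; exact: se_sym (wpow_add _ _ _ _).
- by move=> g; exists (s g); exact: se_refl.
- move=> k; have -> : s (wpow h k) = k.
    rewrite /s -[RHS]mulr1 -Hp big_distrr; apply: eq_bigr => j _.
    by rewrite exps_wpow mxE /= mulrA.
  exact: se_refl.
Qed.

Definition shl r (l : letter r) : letter r.+1 := (lift ord0 l.1, l.2).

Definition gsol r (pw : word r.+1) (i : 'I_r.+2) : word r.+1 :=
  if unlift ord0 i is Some j then [:: (j, false)] else pw.

Lemma weval_shl r (pw : word r.+1) (u : word r.+1) :
  weval (map (@shl r.+1) u) (gsol pw) = u.
Proof.
elim: u => [//|a u IH]; rewrite [map _ _]/= weval_cons IH.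
rewrite /shl /gsol /= liftK; by case: a => j [].
Qed.

Lemma vc_G1 r d (h : word r.+1) : ~ seq_eq d.+1 h [::] ->
  verbally_closed_cyclic d.+1 h -> G1 (exps h).
Proof.
move=> hne VC.
have [g [R [uR Ea]]] := smith_row (exps h).
pose pw := vword (row 0 R).
pose u : word r.+1 := winv (wpow pw g) ++ h.
have eu : exps u = 0.
  by rewrite exps_cat exps_winv exps_wpow exps_vword -Ea addNr.
pose w : word r.+2 := wpow [:: (ord0, false)] g ++ map (@shl r.+1) u.
have Hws : weval w (gsol pw) = wpow pw g ++ u.
  rewrite weval_cat weval_wpow weval_shl; congr (wpow _ _ ++ _).
  by rewrite /weval /= /gsol unlift_none cats0.
have h1 : wpow h 1 = h by rewrite /wpow /= cats0.
have [m Hm] : exists m : 'I_r.+2 -> int,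
    seq_eq d.+1 (weval w (fun i => wpow h (m i))) (wpow h 1).
  apply: VC; exists (gsol pw); rewrite Hws h1 /u.
  exact: se_cancel d [::] (wpow pw g) h.
have Hs := se_trans (se_sym (weval_pow d w h m)) Hm.
have sE : \sum_(a <- w) sgl a * m a.1 = g * m ord0.
  rewrite big_cat big_map /=.
  have -> : \sum_(j <- u) sgl (shl j) * m (shl j).1 = 0.
    rewrite (pair_exps u (fun j => m (lift ord0 j))) eu.
    by rewrite big1 // => j _; rewrite mxE mul0r.
  rewrite addr0 pair_exps exps_wpow exps_letter (bigD1 ord0) //= big1 ?addr0.
    by rewrite !mxE eqxx /= mulr1.
  move=> j nj; rewrite !mxE eqxx /=; have -> : (j == ord0) = false by apply/negbTE. by rewrite mulr0 mul0r.
rewrite sE in Hs.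
set s := g * m ord0 in Hs.
have Hd : derived d.+1 (wpow h (s - 1)).
  apply/se_nil.
  apply: se_trans (se_sym (wpow_add d h s (-1))) _.
  apply: se_trans (se_cat Hs (se_refl d _)) _.
  apply: se_trans (wpow_add d h 1 (-1)) _.
  rewrite subrr; exact: se_refl.
have [g0|gn0] := eqVneq g 0.
  exfalso; apply: hne; apply/se_nil.
  move: Hd; rewrite /s g0 mul0r sub0r /wpow /= cats0 => /D_inv.
  by rewrite winvK.
have := derived_exps Hd; rewrite exps_wpow Ea.
case: (pickP (fun j => R 0 j != 0)) => [j Rj|R0]; last first.
  have : (R *m invmx R) 0 0 = 1 by rewrite mulmxV // mxE.
  rewrite mxE big1 // => j _.
  by have := R0 j; move=> /negbFE /eqP ->; rewrite mul0r.
move=> /matrixP /(_ 0 j); rewrite !mxE => /eqP.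
rewrite !mulf_eq0 (negbTE gn0) (negbTE Rj) !orbF subr_eq0 => /eqP s1.
apply: (unit_G1 (g := g) (R := R)) => //.
by apply/unitrP; exists (m ord0); rewrite mulrC -/s s1.
Qed.

Unset Implicit Arguments.
Local Close Scope ring_scope.

Theorem lemma5 (r d : nat) (h : word r) :
  (1 <= r)%N -> (1 <= d)%N -> ~ seq_eq d h [::] ->
  (verbally_closed_cyclic d h <-> retract_cyclic d h) /\
  (retract_cyclic d h <-> ab_primitive h).
Proof.
case: r h => [//|r] h _; case: d => [//|d] _ hne.
have VG := vc_G1 hne.
have GR := @G1_ret r.+1 d h.
have RV := @ret_vc r.+1 d h.
have GP := @G1_prim r h.
have PG := @prim_G1 r.+1 h.
split; split; tauto.
Qed.
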